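(* Let $A,B,C$ be C*-algebras and $\phi\colon A\to C$, $\psi\colon B\to C$ *-homomorphisms with $\phi$ surjective. Let $I\subseteq A$, $J\subseteq B$, $K\subseteq C$ be closed two-sided ideals with $\phi(I)=K$ and $\psi(J)\subseteq K$, and let $\overline\phi\colon A/I\to C/K$, $\overline\psi\colon B/J\to C/K$ be the induced maps. Then the map $$\gamma\colon (A\oplus_C B)/(I\oplus_K J)\to (A/I)\oplus_{C/K}(B/J),\qquad \gamma((a,b)+I\oplus_K J)=(a+I,\,b+J)$$ is a *-isomorphism.
   Context: For *-homomorphisms $\phi\colon A\to C$, $\psi\colon B\to C$, the pullback is $A\oplus_C B=\{(a,b)\in A\oplus B:\phi(a)=\psi(b)\}$. Here $I\oplus_K J=\{(a,b)\in A\oplus_C B: a\in I, b\in J\}$ (the pullback with respect to $\phi|_I$ and $\psi|_J$), and $(A/I)\oplus_{C/K}(B/J)$ is the pullback with respect to $\overline\phi$ and $\overline\psi$. *)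

(* Defs.v *)
From HB Require Import structures.
From mathcomp Require Import all_boot all_order all_algebra.
From mathcomp Require Import boolp classical_sets reals.
From mathcomp Require Import complex.
Set Implicit Arguments. Unset Strict Implicit. Unset Printing Implicit Defensive.
Import Order.TTheory GRing.Theory Num.Theory.
Local Open Scope ring_scope.
Local Open Scope classical_set_scope.

Record cstar_algebra (R : realType) := CStarAlgebra {
  cs_car :> lmodType R[i];
  cs_mul : cs_car -> cs_car -> cs_car;
  cs_star : cs_car -> cs_car;
  cs_norm : cs_car -> R;
  cs_mulA : forall x y z, cs_mul x (cs_mul y z) = cs_mul (cs_mul x y) z;
  cs_mulDl : forall x y z, cs_mul (x + y) z = cs_mul x z + cs_mul y z;
  cs_mulDr : forall x y z, cs_mul x (y + z) = cs_mul x y + cs_mul x z;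
  cs_mulZl : forall (c : R[i]) x y, cs_mul (c *: x) y = c *: cs_mul x y;
  cs_mulZr : forall (c : R[i]) x y, cs_mul x (c *: y) = c *: cs_mul x y;
  cs_starK : forall x, cs_star (cs_star x) = x;
  cs_starD : forall x y, cs_star (x + y) = cs_star x + cs_star y;
  cs_starZ : forall (c : R[i]) x, cs_star (c *: x) = (Num.conj c) *: cs_star x;
  cs_starM : forall x y, cs_star (cs_mul x y) = cs_mul (cs_star y) (cs_star x);
  cs_norm_eq0 : forall x, cs_norm x = 0 -> x = 0;
  cs_norm_ge0 : forall x, 0 <= cs_norm x;
  cs_normD : forall x y, cs_norm (x + y) <= cs_norm x + cs_norm y;
  cs_normZ : forall (c : R[i]) x, ((cs_norm (c *: x))%:C)%C = `|c| * ((cs_norm x)%:C)%C;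
  cs_normM : forall x y, cs_norm (cs_mul x y) <= cs_norm x * cs_norm y;
  cs_cstar : forall x, cs_norm (cs_mul (cs_star x) x) = cs_norm x ^+ 2;
  cs_complete : forall u : nat -> cs_car,
    (forall e : R, 0 < e -> exists N, forall m n, (N <= m)%N -> (N <= n)%N ->
        cs_norm (u m - u n) < e) ->
    exists l, forall e : R, 0 < e -> exists N, forall n, (N <= n)%N ->
        cs_norm (u n - l) < e
}.

Section Defs.
Variable R : realType.

Definition cs_converges (A : cstar_algebra R) (u : nat -> A) (l : A) :=
  forall e : R, 0 < e -> exists N, forall n, (N <= n)%N -> cs_norm (u n - l) < e.

Definition star_hom (A B : cstar_algebra R) (f : A -> B) :=
  [/\ forall (c : R[i]) x y, f (c *: x + y) = c *: f x + f y,
      forall x y, f (cs_mul x y) = cs_mul (f x) (f y)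
    & forall x, f (cs_star x) = cs_star (f x)].

Definition closed_ideal (A : cstar_algebra R) (I : set A) :=
  [/\ I 0,
      forall x y, I x -> I y -> I (x + y),
      forall (c : R[i]) x, I x -> I (c *: x),
      forall a x, I x -> I (cs_mul a x) /\ I (cs_mul x a)
    & forall (u : nat -> A) l, (forall n, I (u n)) -> cs_converges u l -> I l].

(* Q together with q : A -> Q is the quotient C*-algebra A/I, i.e.
   q is a surjective *-homomorphism with kernel exactly I. *)
Definition is_quotient (A Q : cstar_algebra R) (I : set A) (q : A -> Q) :=
  [/\ star_hom q, forall y, exists x, q x = y & forall x, q x = 0 <-> I x].

Definition pullback (A B C : cstar_algebra R) (phi : A -> C) (psi : B -> C)
  : set (A * B) := [set ab | phi ab.1 = psi ab.2].

Definition pullback_ideal (A B C : cstar_algebra R) (phi : A -> C) (psi : B -> C)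
  (I : set A) (J : set B) : set (A * B) :=
  [set ab | pullback phi psi ab /\ I ab.1 /\ J ab.2].

(* P together with p is the quotient of the pullback C*-algebra
   A (+)_C B (with componentwise operations) by the ideal I (+)_K J. *)
Definition is_pullback_quotient (A B C P : cstar_algebra R)
  (phi : A -> C) (psi : B -> C) (I : set A) (J : set B) (p : A * B -> P) :=
  let PB := pullback phi psi in
  [/\ forall (c : R[i]) ab ab', PB ab -> PB ab' ->
        p (c *: ab.1 + ab'.1, c *: ab.2 + ab'.2) = c *: p ab + p ab',
      forall ab ab', PB ab -> PB ab' ->
        p (cs_mul ab.1 ab'.1, cs_mul ab.2 ab'.2) = cs_mul (p ab) (p ab'),
      forall ab, PB ab -> p (cs_star ab.1, cs_star ab.2) = cs_star (p ab),
      forall z, exists2 ab, PB ab & p ab = z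
    & forall ab, PB ab -> (p ab = 0 <-> pullback_ideal phi psi I J ab)].

Definition star_iso_onto_pullback (P X Y Z : cstar_algebra R)
  (f1 : X -> Z) (f2 : Y -> Z) (g : P -> X * Y) :=
  [/\ forall (c : R[i]) z w,
        g (c *: z + w) = (c *: (g z).1 + (g w).1, c *: (g z).2 + (g w).2),
      forall z w, g (cs_mul z w) = (cs_mul (g z).1 (g w).1, cs_mul (g z).2 (g w).2),
      forall z, g (cs_star z) = (cs_star (g z).1, cs_star (g z).2),
      injective g
    & forall xy, pullback f1 f2 xy <-> exists z, g z = xy].

End Defs.

(* Main.v *)
Require Import Defs.
From HB Require Import structures.
From mathcomp Require Import all_boot all_order all_algebra.
From mathcomp Require Import boolp classical_sets reals.
From mathcomp Require Import complex.
Import Order.TTheory GRing.Theory Num.Theory.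
Local Open Scope ring_scope.
Local Open Scope classical_set_scope.

Section Helpers.
Variable R : realType.
Variables (U V : lmodType R[i]) (f : U -> V).
Hypothesis H : forall (c : R[i]) x y, f (c *: x + y) = c *: f x + f y.

Lemma linB x y : f ((-1) *: x + y) = 0 -> f y = f x.
Proof. by rewrite H scaleN1r => /eqP; rewrite addrC subr_eq0 => /eqP. Qed.

Lemma linB' x y : f y = f x -> f ((-1) *: x + y) = 0.
Proof. by move=> e; rewrite H e scaleNr scale1r addNr. Qed.

Lemma linD x y : f (x + y) = f x + f y.
Proof. by have := H 1 x y; rewrite !scale1r. Qed.
End Helpers.
Arguments linB {R U V f} H {x y}.
Arguments linB' {R U V f} H {x y}.
Arguments linD {R U V f} H x y.


Theorem proposition2p9 (R : realType) (A B C : cstar_algebra R)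
  (phi : A -> C) (psi : B -> C) (I : set A) (J : set B) (K : set C)
  (QA QB QC P : cstar_algebra R)
  (qI : A -> QA) (qJ : B -> QB) (qK : C -> QC) (p : A * B -> P)
  (phib : QA -> QC) (psib : QB -> QC) :
  star_hom phi -> star_hom psi -> (forall c, exists a, phi a = c) ->
  closed_ideal I -> closed_ideal J -> closed_ideal K ->
  phi @` I = K -> psi @` J `<=` K ->
  is_quotient I qI -> is_quotient J qJ -> is_quotient K qK ->
  (forall a, phib (qI a) = qK (phi a)) ->
  (forall b, psib (qJ b) = qK (psi b)) ->
  is_pullback_quotient phi psi I J p ->
  exists gamma : P -> QA * QB,
    (forall ab, pullback phi psi ab -> gamma (p ab) = (qI ab.1, qJ ab.2)) /\
    star_iso_onto_pullback phib psib gamma.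
Proof.
move=> [phiL phiM phiS] [psiL psiM psiS] _ _ _ _ IK JK.
move=> [[qIL qIM qIS] qIsurj qIker] [[qJL qJM qJS] qJsurj qJker].
move=> [[qKL qKM qKS] qKsurj qKker] hphi hpsi [pL pM pS psurj pker].
have rep : forall z, {ab | pullback phi psi ab & p ab = z} by move=> z; apply: cid2.
have PBL : forall (c : R[i]) ab ab', pullback phi psi ab -> pullback phi psi ab' ->
    pullback phi psi (c *: ab.1 + ab'.1, c *: ab.2 + ab'.2).
  by move=> c ab ab' h h'; rewrite /pullback /= phiL psiL h h'.
have PBM : forall ab ab', pullback phi psi ab -> pullback phi psi ab' ->
    pullback phi psi (cs_mul ab.1 ab'.1, cs_mul ab.2 ab'.2).
  by move=> ab ab' h h'; rewrite /pullback /= phiM psiM h h'.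
have PBS : forall ab, pullback phi psi ab ->
    pullback phi psi (cs_star ab.1, cs_star ab.2).
  by move=> ab h; rewrite /pullback /= phiS psiS h.
have wd : forall ab ab', pullback phi psi ab -> pullback phi psi ab' ->
    p ab = p ab' <-> (qI ab.1 = qI ab'.1 /\ qJ ab.2 = qJ ab'.2).
  move=> ab ab' h h'; have hd := PBL (-1) ab ab' h h'.
  have pd : p ((-1) *: ab.1 + ab'.1, (-1) *: ab.2 + ab'.2) = (-1) *: p ab + p ab'.
    by rewrite pL.
  split.
  - move=> e.
    have pd0 : p ((-1) *: ab.1 + ab'.1, (-1) *: ab.2 + ab'.2) = 0.
      by rewrite pd e scaleN1r addNr.
    have [_ [dI dJ]] := (pker _ hd).1 pd0.
    split; symmetry; [apply: (linB qIL); exact/qIker | apply: (linB qJL); exact/qJker].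
  - move=> [e1 e2].
    have dI : I ((-1) *: ab.1 + ab'.1) by apply/qIker; apply: (linB' qIL).
    have dJ : J ((-1) *: ab.2 + ab'.2) by apply/qJker; apply: (linB' qJL).
    have := (pker _ hd).2 (conj hd (conj dI dJ)).
    by rewrite pd scaleN1r => /eqP; rewrite addrC subr_eq0 => /eqP.
pose g z := (qI (s2val (rep z)).1, qJ (s2val (rep z)).2).
have gE : forall ab, pullback phi psi ab -> g (p ab) = (qI ab.1, qJ ab.2).
  move=> ab h; rewrite /g; case: (rep (p ab)) => ab' h' e /=.
  by have [e1 e2] := (wd _ _ h' h).1 e; rewrite e1 e2.
exists g; split => //; split.
- move=> c z w; have [ab h <-] := psurj z; have [ab' h' <-] := psurj w.
  rewrite -pL // gE; last exact: PBL.
  by rewrite !gE //= qIL qJL.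
- move=> z w; have [ab h <-] := psurj z; have [ab' h' <-] := psurj w.
  rewrite -pM // gE; last exact: PBM.
  by rewrite !gE //= qIM qJM.
- move=> z; have [ab h <-] := psurj z.
  rewrite -pS // gE; last exact: PBS.
  by rewrite !gE //= qIS qJS.
- move=> z w; have [ab h <-] := psurj z; have [ab' h' <-] := psurj w.
  by rewrite !gE // => -[e1 e2]; apply/(wd _ _ h h').2.
- case=> x y; split.
  + rewrite /pullback /= => hxy.
    have [a ea] := qIsurj x; have [b eb] := qJsurj y.
    subst x y; rewrite hphi hpsi in hxy.
    have hK : K ((-1) *: phi a + psi b) by apply/qKker; apply: (linB' qKL).
    rewrite -IK in hK; case: hK => i Ii ei.
    have h : pullback phi psi (a + i, b).
      by rewrite /pullback /= (linD phiL) ei addrA scaleN1r subrr add0r.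
    exists (p (a + i, b)); rewrite gE //= (linD qIL).
    have -> : qI i = 0 by apply/qIker.
    by rewrite addr0.
  + move=> [z <-]; have [ab h <-] := psurj z; rewrite gE //.
    by rewrite /pullback /= hphi hpsi h.
Qed.
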